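(* Let $k\ge 2$ be an integer and suppose $l$ is the minimal size of an alphabet over which there exists an infinite $k$th-power-free word. Then: (1) for every alphabet $\Sigma$ with $|\Sigma|\le l-1$ and every antimorphic involution $\theta$ on $\Sigma^*$, there is no infinite word over $\Sigma$ that is pseudo-$k$th-power-free with respect to $\theta$; and (2) for every finite alphabet $\Sigma'$ and every antimorphic involution $\theta$ on $\Sigma'^*$ with $|\operatorname{Trn}(\theta)|\ge l$, there is an infinite word over $\Sigma'$ that is pseudo-$k$th-power-free with respect to $\theta$.
   Context: Alphabets are totally ordered (letters $0,1,2,\dots$). A $k$th power is a word $u^k$ with $u$ nonempty; a word is $k$th-power-free if none of its factors (contiguous subwords) is a $k$th power. A function $\theta:\Sigma^*\to\Sigma^*$ is an antimorphic involution if $\theta(uv)=\theta(v)\theta(u)$ and $\theta(\theta(w))=w$. $\operatorname{Trn}(\theta)=\{a\in\Sigma:\theta(a)>a\}$. A nonempty word $w$ is a pseudo $k$th power with respect to $\theta$ if $w=u_1\cdots u_k$ where for all $1\le i,j\le k$, $u_i=u_j$ or $u_i=\theta(u_j)$; a word is pseudo-$k$th-power-free if no factor of it is a pseudo $k$th power. *)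

(* Defs.v *)
(* Alphabets are 'I_n (letters 0..n-1, totally ordered). *)
From mathcomp Require Import all_boot all_order.
Set Implicit Arguments. Unset Strict Implicit. Unset Printing Implicit Defensive.

Section Words.
Variable n : nat.
Notation word := (seq 'I_n).

Definition antimorphic_involution (th : word -> word) : Prop :=
  (forall u v, th (u ++ v) = th v ++ th u) /\ (forall w, th (th w) = w).

Definition Trn (th : word -> word) : {set 'I_n} :=
  [set a : 'I_n | [exists b : 'I_n, (th [:: a] == [:: b]) && (a < b)%N]].

Definition is_kth_power (k : nat) (s : word) : Prop :=
  exists u : word, u != [::] /\ s = flatten (nseq k u).

Definition is_pseudo_kth_power (th : word -> word) (k : nat) (s : word) : Prop :=
  s != [::] /\
  exists us : seq word, size us = k /\ flatten us = s /\
    forall i j, i < k -> j < k ->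
      nth [::] us i = nth [::] us j \/ nth [::] us i = th (nth [::] us j).

Definition factor (w : nat -> 'I_n) (i m : nat) : word :=
  [seq w (i + j) | j <- iota 0 m].

Definition kth_power_free_inf (k : nat) (w : nat -> 'I_n) : Prop :=
  forall i m, ~ is_kth_power k (factor w i m).

Definition pseudo_kth_power_free_inf (th : word -> word) (k : nat)
  (w : nat -> 'I_n) : Prop :=
  forall i m, ~ is_pseudo_kth_power th k (factor w i m).
End Words.

Definition min_kfree_alphabet (k l : nat) : Prop :=
  (exists w : nat -> 'I_l, kth_power_free_inf k w) /\
  (forall n, n < l -> ~ exists w : nat -> 'I_n, kth_power_free_inf k w).

(* Main.v *)
Require Import Defs.
From mathcomp Require Import all_boot all_order.

Lemma flatten_nseq_nil (T : eqType) k (u : seq T) :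
  0 < k -> u != [::] -> flatten (nseq k u) != [::].
Proof. by case: k => // k _; case: u. Qed.

Lemma kpow_pseudo n (th : seq 'I_n -> seq 'I_n) k s :
  0 < k -> is_kth_power k s -> is_pseudo_kth_power th k s.
Proof.
move=> k0 [u [u0 ->]]; split; first exact: flatten_nseq_nil.
exists (nseq k u); split; first by rewrite size_nseq.
split=> // i j ik jk; left; by rewrite !nth_nseq ik jk.
Qed.

Lemma trn_contra n (th : seq 'I_n -> seq 'I_n) u :
  antimorphic_involution th -> u != [::] ->
  all ((fun x => x \in Trn th)) u -> all ((fun x => x \in Trn th)) (th u) -> False.
Proof.
move=> [thc thi]; case: u => // a v _ /andP [aT _].
have -> : a :: v = [:: a] ++ v by [].
rewrite thc.
move: aT; rewrite /= inE => /existsP [b /andP [/eqP ha ab]].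
rewrite ha all_cat /= andbT => /andP [_].
rewrite inE => /existsP [c /andP [/eqP hb bc]].
move: (thi [:: a]); rewrite ha hb => -[ca].
by move: (ltn_trans ab bc); rewrite ca ltnn.
Qed.

Lemma map_flatten_nseq (A B : Type) (g : A -> B) k (u : seq A) :
  map g (flatten (nseq k u)) = flatten (nseq k (map g u)).
Proof. by elim: k => //= k IH; rewrite map_cat IH. Qed.

Lemma exists_nonnil (T : eqType) (us : seq (seq T)) :
  flatten us != [::] -> exists2 j, j < size us & nth [::] us j != [::].
Proof.
elim: us => [|u us IH] //=.
case: (boolP (u != [::])) => [un _|]; first by exists 0.
rewrite negbK => /eqP -> /= /IH [j jk uj]; by exists j.+1.
Qed.

Theorem mainTheorem12 (k l : nat) :
  2 <= k -> min_kfree_alphabet k l ->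
  (forall (n : nat) (th : seq 'I_n -> seq 'I_n),
      n <= l - 1 -> antimorphic_involution th ->
      ~ exists w : nat -> 'I_n, pseudo_kth_power_free_inf th k w) /\
  (forall (n : nat) (th : seq 'I_n -> seq 'I_n),
      antimorphic_involution th -> l <= #|Trn th| ->
      exists w : nat -> 'I_n, pseudo_kth_power_free_inf th k w).
Proof.
move=> k2 [[w wfree] minl].
have k0 : 0 < k by apply: leq_trans k2.
split.
  move=> n th nl ath [v vfree]; apply: (minl n).
    by case: (w 0) => a al; apply: leq_ltn_trans nl _; rewrite subn1 prednK //; apply: leq_ltn_trans al.
  exists v => i m hp; apply: (vfree i m); exact: kpow_pseudo.
move=> n th ath lT.
pose f (a : 'I_l) : 'I_n := enum_val (widen_ord lT a).
have finj : injective f.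
  by move=> a b /enum_val_inj [] /val_inj.
have fT a : f a \in Trn th by exact: enum_valP.
pose finv (b : 'I_n) : 'I_l := odflt (w 0) [pick a | f a == b].
have finvK : cancel f finv.
  move=> a; rewrite /finv; case: pickP => [a' /eqP /finj -> //|].
  by move=> /(_ a); rewrite eqxx.
exists (fun t => f (w t)) => i m [s0 [us [sz [fl H]]]].
have fact : factor (fun t => f (w t)) i m = map f (factor w i m).
  by rewrite /factor -map_comp.
have allT : all ((fun x => x \in Trn th)) (factor (fun t => f (w t)) i m).
  by rewrite fact all_map; apply/allP => x _ /=; apply: fT.
have partT j : j < k -> all ((fun x => x \in Trn th)) (nth [::] us j).
  move=> jk; move: allT; rewrite -fl.
  move=> /allP HA; apply/allP => x xin; apply: HA.
  apply/flattenP; exists (nth [::] us j) => //; apply: mem_nth; by rewrite sz.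
have [j jk uj] : exists2 j, j < k & nth [::] us j != [::].
  by rewrite -sz; apply: exists_nonnil; rewrite fl.
have eqall : us = nseq k (nth [::] us j).
  apply: (@eq_from_nth _ [::]); first by rewrite size_nseq.
  move=> i' i'k; rewrite nth_nseq -sz i'k; rewrite sz in i'k.
  case: (H i' j i'k jk) => // e; exfalso.
  apply: (@trn_contra _ _ _ ath uj (partT j jk)); rewrite -e; exact: partT.
apply: (wfree i m); exists (map finv (nth [::] us j)); split.
  by move: uj; case: (nth [::] us j).
rewrite -(mapK finvK (factor w i m)) -fact -fl {1}eqall.
by rewrite map_flatten_nseq.
Qed.
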